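(* Let $G$ be a connected Cartesian-prime graph with at least two vertices, and put $n=|V(G)|$, $m=|E(G)|$. Let $$r=\max\{\,|\beta|_e\cdot n+|\beta|\cdot m \;:\; \beta\in\mathrm{Aut}(G)\setminus\{\mathrm{id}\}\,\},$$ with $r=0$ if $\mathrm{Aut}(G)$ is trivial. Then $$\theta'(G\,\square\, G)=\max\{\,n\cdot m,\ r\,\}+1.$$
   Context: All graphs are finite and simple. $\square$ denotes the Cartesian product. A graph is (Cartesian) prime if it is not isomorphic to a Cartesian product of two graphs each with at least two vertices. For an automorphism $\beta$ (acting on edges by $\beta(uv)=\beta(u)\beta(v)$), $|\beta|$ is the number of cycles (including fixed points) of $\beta$ on $V(G)$, and $|\beta|_e$ is the number of cycles of $\beta$ on $E(G)$. An edge coloring with $k$ colors is a surjective map onto $\{1,\dots,k\}$. It is distinguishing if only the identity automorphism preserves all edge colors. $\theta'(H)$ is the least $k$ such that every edge coloring of $H$ using exactly $k$ colors is distinguishing. *)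

(* Defs.v *)
From mathcomp Require Import all_boot all_order all_fingroup.
Set Implicit Arguments. Unset Strict Implicit. Unset Printing Implicit Defensive.

Section Graphs.
Variable T : finType.

Definition simple_graph (e : rel T) := symmetric e /\ irreflexive e.

Definition connected_graph (e : rel T) := forall x y : T, connect e x y.

Definition edges (e : rel T) : {set {set T}} :=
  [set [set x; y] | x in [set: T], y in [set y | e x y]].

Definition is_aut (e : rel T) (s : {perm T}) : bool :=
  [forall x, forall y, e (s x) (s y) == e x y].

(* |beta|: number of cycles (incl. fixed points) on V *)
Definition vcycles (s : {perm T}) : nat := #|porbits s|.

(* |beta|_e: number of cycles of beta acting on E by beta(uv) = beta(u)beta(v) *)
Definition ecycles (e : rel T) (s : {perm T}) : nat :=
  #|[set [set Y in edges e | fconnect (fun A : {set T} => s @: A) X Y]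
      | X in edges e]|.

(* edge colouring with exactly k colours (colours 'I_k, i.e. {0..k-1}),
   values of c on non-edges are irrelevant *)
Definition edge_coloring (e : rel T) k (c : {set T} -> 'I_k) :=
  forall i : 'I_k, exists2 X, X \in edges e & c X = i.

Definition distinguishing (e : rel T) k (c : {set T} -> 'I_k) :=
  forall s : {perm T}, is_aut e s ->
    (forall X, X \in edges e -> c (s @: X) = c X) -> s = 1%g.

Definition all_colorings_dist (e : rel T) k :=
  forall c : {set T} -> 'I_k, edge_coloring e c -> distinguishing e c.

Definition theta'_is (e : rel T) (k : nat) :=
  [/\ 0 < k, all_colorings_dist e k &
      forall j, 0 < j < k -> ~ all_colorings_dist e j].
End Graphs.

Definition cart_prod (A B : finType) (eA : rel A) (eB : rel B) : rel (A * B) :=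
  fun u v => (eA u.1 v.1 && (u.2 == v.2)) || ((u.1 == v.1) && eB u.2 v.2).

Definition cart_prime (T : finType) (e : rel T) :=
  ~ exists (A B : finType) (eA : rel A) (eB : rel B) (f : T -> A * B),
      [/\ simple_graph eA, simple_graph eB, 1 < #|A|, 1 < #|B| &
          bijective f /\ forall x y, e x y = cart_prod eA eB (f x) (f y)].

Definition r_param (T : finType) (e : rel T) : nat :=
  \max_(s : {perm T} | is_aut e s && (s != 1%g))
     (ecycles e s * #|T| + vcycles s * #|edges e|).

(* Main.v *)
Require Import Defs.
From mathcomp Require Import all_boot all_order all_fingroup.
Set Implicit Arguments. Unset Strict Implicit. Unset Printing Implicit Defensive.

Lemma autE (U : finType) (r : rel U) s x y : is_aut r s -> r (s x) (s y) = r x y.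
Proof. by move=> /forallP/(_ x)/forallP/(_ y)/eqP. Qed.

Section Row.
Variables (T : finType) (e : rel T).
Hypothesis sg : simple_graph e.
Hypothesis conn : connected_graph e.
Hypothesis prime : cart_prime e.

Let esym : symmetric e. Proof. by case: sg. Qed.
Let eirr : irreflexive e. Proof. by case: sg. Qed.

Local Notation eP := (cart_prod e e).

Variables (phi : {perm T * T}) (y0 : T).
Hypothesis phiA : is_aut eP phi.

Let a x := (phi (x, y0)).1.
Let b x := (phi (x, y0)).2.

Lemma phi_ab x : phi (x, y0) = (a x, b x).
Proof. by rewrite /a /b -surjective_pairing. Qed.

Lemma Fback x x' : eP (a x, b x) (a x', b x') = e x x'.
Proof.
by rewrite -!phi_ab autE // /cart_prod /= eqxx eirr andbF orbF andbT.
Qed.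

Lemma Fedge x x' : e x x' ->
  (e (a x) (a x') /\ b x = b x') \/ (a x = a x' /\ e (b x) (b x')).
Proof.
rewrite -Fback /cart_prod /= => /orP[/andP[H /eqP H']|/andP[/eqP H H']].
  by left. by right.
Qed.

Let Hrel x x' := e x x' && (b x == b x').
Let Vrel x x' := e x x' && (a x == a x').

Lemma Hrel_a x x' : Hrel x x' -> e (a x) (a x').
Proof.
case/andP=> exx /eqP bb; case: (Fedge exx) => [[]//|[_ H]].
by move: H; rewrite bb eirr.
Qed.

Lemma Vrel_b x x' : Vrel x x' -> e (b x) (b x').
Proof.
case/andP=> exx /eqP aa; case: (Fedge exx) => [[H _]|[]//].
by move: H; rewrite aa eirr.
Qed.

Lemma square x y q : Vrel x y -> Hrel y q -> exists z, Hrel x z /\ Vrel z q.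
Proof.
move=> Vxy Hyq.
have ebxy := Vrel_b Vxy; have eayq := Hrel_a Hyq.
move: Vxy Hyq => /andP[exy /eqP axy] /andP[eyq /eqP byq].
pose t := (a q, b x).
pose z' := (phi^-1)%g t.
have phz : phi z' = t by rewrite /z' permKV.
have E1 : eP z' (x, y0).
  rewrite -(autE _ _ phiA) phz phi_ab /cart_prod /= eqxx andbT.
  by rewrite axy esym eayq.
have E2 : eP z' (q, y0).
  rewrite -(autE _ _ phiA) phz phi_ab /cart_prod /= eqxx /=.
  by rewrite -byq ebxy orbT.
move: E1 E2 phz; case: z' => z1 z2.
rewrite /cart_prod /=.
case: (eqVneq z2 y0) => [->|ne].
  rewrite eirr !andbT !andbF !orbF => ez1x ez1q.
  rewrite phi_ab => -[az bz].
  exists z1; rewrite /Hrel /Vrel esym ez1x ez1q bz az !eqxx.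
  by [].
rewrite !andbF /= => /andP[/eqP z1x _] /andP[/eqP z1q _].
by move: eayq; rewrite -z1q z1x axy eirr.
Qed.

Lemma conn_fun (r : rel T) (g : T -> T) u w :
  (forall x y, r x y -> g x = g y) -> connect r u w -> g u = g w.
Proof.
move=> H /connectP[p pth ->]; elim: p u pth => //= z p IH u /andP[ruz pth].
by rewrite (H _ _ ruz) IH.
Qed.

Lemma comm_path p : forall u z, Vrel u z -> path Hrel z p ->
  exists w, connect Hrel u w /\ Vrel w (last z p).
Proof.
elim: p => [|q p IH] u z Vuz /=; first by exists u; rewrite connect0.
case/andP=> Hzq pth.
have [z1 [Hu Vz]] := square Vuz Hzq.
have [w [c V]] := IH _ _ Vz pth.
exists w; split => //.
by apply: connect_trans c; apply: connect1.
Qed.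

Lemma decomp u v : exists w, connect Hrel u w /\ connect Vrel w v.
Proof.
have /connectP[p pth ->] := conn u v.
elim: p u pth => [|z p IH] u /=; first by move=> _; exists u; rewrite !connect0.
case/andP=> euz pth.
have [w [c1 c2]] := IH _ pth.
case: (Fedge euz) => [[_ buz]|[auz _]].
  exists w; split => //; apply: connect_trans c1; apply: connect1.
  by rewrite /Hrel euz buz eqxx.
have Vuz : Vrel u z by rewrite /Vrel euz auz eqxx.
have /connectP[p' pth' Ew] := c1.
have [w' [c3 V3]] := comm_path Vuz pth'.
exists w'; split => //; apply: connect_trans c2; apply: connect1.
by rewrite Ew.
Qed.

Lemma decomp_ab u v : exists w, a w = a v /\ b w = b u.
Proof.
have [w [c1 c2]] := decomp u v.
exists w; split.
  by apply: (conn_fun (r := Vrel)) c2 => x y /andP[_ /eqP].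
by symmetry; apply: (conn_fun (r := Hrel)) c1 => x y /andP[_ /eqP].
Qed.


Lemma row_kind : (forall x x', b x = b x') \/ (forall x x', a x = a x').
Proof.
case: (boolP [forall x, forall x', b x == b x']) => [H|Hb].
  by left => x x'; move/forallP: H => /(_ x)/forallP/(_ x')/eqP.
case: (boolP [forall x, forall x', a x == a x']) => [H|Ha].
  by right => x x'; move/forallP: H => /(_ x)/forallP/(_ x')/eqP.
exfalso.
move/forallPn: Hb => [x1 /forallPn [x1' nb]].
move/forallPn: Ha => [x2 /forallPn [x2' na]].
pose PA := [set a z | z in [set: T]].
pose PB := [set b z | z in [set: T]].
pose A := {x : T | x \in PA}.
pose B := {x : T | x \in PB}.
pose eA := fun u v : A => e (val u) (val v).
pose eB := fun u v : B => e (val u) (val v).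
have inA z : a z \in PA by apply: imset_f; rewrite in_setT.
have inB z : b z \in PB by apply: imset_f; rewrite in_setT.
pose g := fun z => ((exist _ (a z) (inA z) : A), (exist _ (b z) (inB z) : B)).
apply: prime; exists A, B, eA, eB, g; split.
- by split; [move=> u v; rewrite /eA esym | move=> u; rewrite /eA eirr].
- by split; [move=> u v; rewrite /eB esym | move=> u; rewrite /eB eirr].
- rewrite card_sig; apply/card_gt1P; exists (a x2), (a x2'); split => //.
- rewrite card_sig; apply/card_gt1P; exists (b x1), (b x1'); split => //.
split.
  apply: inj_card_bij.
    move=> z z' [E1 E2].
    have : phi (z, y0) = phi (z', y0) by rewrite !phi_ab E1 E2.
    by move/perm_inj => [].
  rewrite -cardsT -[X in _ <= X]cardsT.
  apply: (leq_trans _ (leq_imset_card g [set: T])).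
  apply: subset_leq_card; apply/subsetP => -[[pa Hpa] [pb Hpb]] _.
  have /imsetP[v _ Ev] := Hpa; have /imsetP[u _ Eu] := Hpb.
  have [w [aw bw]] := decomp_ab u v.
  apply/imsetP; exists w; rewrite ?in_setT //.
  rewrite /g; congr pair; apply: val_inj => /=; by [rewrite aw | rewrite bw].
move=> z z'; rewrite -Fback /cart_prod /g /=.
by rewrite -!val_eqE.
Qed.
End Row.

Section Orb.
Variables (V : finType) (f : V -> V).
Hypothesis finj : injective f.
Variable S : {set V}.
Hypothesis Sf : forall x, x \in S -> f x \in S.

Definition orbS x := [set y in S | fconnect f x y].
Definition ecount := #|[set orbS x | x in S]|.

Lemma orbS_eq x y : fconnect f x y -> orbS x = orbS y.
Proof.
move=> cxy; apply/setP=> z; rewrite !inE.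
case: (z \in S) => //=; apply/idP/idP => H.
  by apply: connect_trans H; rewrite fconnect_sym.
exact: connect_trans cxy H.
Qed.

Lemma orbS_id x : x \in S -> x \in orbS x.
Proof. by move=> xS; rewrite inE xS connect0. Qed.

Definition pk x := [pick z in orbS x].
Definition Rep := [set y in S | pk y == Some y].

Lemma pk_some x : x \in S -> exists2 r, pk x = Some r & r \in orbS x.
Proof.
rewrite /pk; case: (pickP [pred z | z \in orbS x]) => [r Hr | H] xS.
  by exists r.
by have := H x; rewrite /= orbS_id.
Qed.

Lemma rep_ex x : x \in S -> exists2 r, r \in Rep & fconnect f r x.
Proof.
move=> xS; have [r Hp] := pk_some xS.
rewrite inE => /andP[rS cxr].
exists r; last by rewrite fconnect_sym.
rewrite inE rS /=; have -> : pk r = pk x by rewrite /pk (orbS_eq cxr).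
by rewrite Hp.
Qed.

Lemma rep_uniq r r' : r \in Rep -> r' \in Rep -> fconnect f r r' -> r = r'.
Proof.
rewrite !inE => /andP[_ /eqP H1] /andP[_ /eqP H2] c.
by move: H1; rewrite /pk (orbS_eq c) -/(pk r') H2 => -[].
Qed.

Lemma rep_sub : Rep \subset S.
Proof. by apply/subsetP => r; rewrite inE => /andP[]. Qed.

Lemma card_Rep : #|Rep| = ecount.
Proof.
rewrite /ecount.
have -> : [set orbS x | x in S] = [set orbS x | x in Rep].
  apply/eqP; rewrite eqEsubset [X in _ && X]imsetS ?rep_sub // andbT.
  apply/subsetP => O /imsetP[x xS ->].
  have [r rR crx] := rep_ex xS.
  by apply/imsetP; exists r => //; rewrite (orbS_eq crx).
rewrite card_in_imset // => r r' rR r'R E.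
apply: rep_uniq => //.
have : r' \in orbS r' by rewrite orbS_id // (subsetP rep_sub).
by rewrite -E inE => /andP[].
Qed.

Lemma ecount_le (D : {set V}) :
  (forall x, x \in S -> exists2 d, d \in D & fconnect f d x) -> ecount <= #|D|.
Proof.
move=> H; rewrite /ecount.
apply: (leq_trans _ (leq_imset_card orbS D)).
apply: subset_leq_card; apply/subsetP => O /imsetP[x xS ->].
have [d dD cdx] := H x xS.
by apply/imsetP; exists d => //; rewrite (orbS_eq cdx).
Qed.

Lemma ecount_ge (D : {set V}) : D \subset S ->
  (forall d d', d \in D -> d' \in D -> fconnect f d d' -> d = d') -> #|D| <= ecount.
Proof.
move=> DS H; rewrite /ecount -(card_in_imset (f:=orbS)); last first.
  move=> d d' dD d'D E; apply: H => //.
  have : d' \in orbS d' by rewrite orbS_id // (subsetP DS).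
  by rewrite -E inE => /andP[].
by apply: subset_leq_card; apply: imsetS.
Qed.

Lemma iter_S k x : x \in S -> iter k f x \in S.
Proof. by elim: k => //= k IH xS; apply: Sf; apply: IH. Qed.

Lemma color_le (K : finType) (c : V -> K) :
  (forall x, x \in S -> c (f x) = c x) -> #|[set c x | x in S]| <= ecount.
Proof.
move=> Hc; rewrite -card_Rep.
apply: (leq_trans _ (leq_imset_card c Rep)).
apply: subset_leq_card; apply/subsetP => k /imsetP[x xS ->].
have [r rR crx] := rep_ex xS.
apply/imsetP; exists r => //.
have rS : r \in S by rewrite (subsetP rep_sub).
rewrite -(iter_findex crx).
elim: (findex f r x) => //= n IH.
by rewrite Hc ?IH // iter_S.
Qed.

Lemma color_ex j : 0 < j <= ecount ->
  exists c : V -> 'I_j, (forall i, exists2 x, x \in S & c x = i) /\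
                       (forall x, x \in S -> c (f x) = c x).
Proof.
case: j => // j /= Hj.
pose OS := [set orbS x | x in S].
exists (fun x => inord (minn j (index (orbS x) (enum OS)))); split; last first.
  by move=> x xS; rewrite (orbS_eq (fconnect1 f x)).
move=> i.
have ilt : i < size (enum OS) by rewrite -cardE; apply: leq_trans Hj.
have : nth set0 (enum OS) i \in OS by rewrite -mem_enum mem_nth.
case/imsetP => x xS Ex; exists x => //.
rewrite -Ex index_uniq ?enum_uniq //.
apply: val_inj; rewrite /= inordK; last by rewrite ltnS geq_minl.
by apply/minn_idPr; rewrite -ltnS.
Qed.
End Orb.

Section Gen.
Variables (U : finType) (r : rel U).
Lemma autP (s : {perm U}) : (forall x y, r (s x) (s y) = r x y) -> is_aut r s.
Proof. by move=> H; apply/forallP=> x; apply/forallP=> y; rewrite H. Qed.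
Lemma autM (s t : {perm U}) : is_aut r s -> is_aut r t -> is_aut r (s * t)%g.
Proof. by move=> As At; apply: autP => x y; rewrite !permM !autE. Qed.
Lemma autV (s : {perm U}) : is_aut r s -> is_aut r (s^-1)%g.
Proof. by move=> As; apply: autP => x y; rewrite -(autE _ _ As) !permKV. Qed.
Lemma autX (s : {perm U}) k : is_aut r s -> is_aut r (s ^+ k)%g.
Proof.
move=> As; elim: k => [|k IH]; first by apply: autP => x y; rewrite !perm1.
by rewrite expgSr autM.
Qed.
Lemma aut1 : is_aut r 1%g.
Proof. by apply: autP => x y; rewrite !perm1. Qed.
End Gen.

Definition sw (T : finType) (u : T * T) := (u.2, u.1).
Lemma sw_inj (T : finType) : injective (@sw T).
Proof. by move=> [x y] [x' y'] [-> ->]. Qed.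
Definition swapP (T : finType) : {perm T * T} := perm (@sw_inj T).

Section Class.
Variables (T : finType) (e : rel T).
Hypothesis sg : simple_graph e.
Hypothesis conn : connected_graph e.
Hypothesis prime : cart_prime e.
Hypothesis n2 : 1 < #|T|.
Let esym : symmetric e. Proof. by case: sg. Qed.
Let eirr : irreflexive e. Proof. by case: sg. Qed.
Local Notation eP := (cart_prod e e).

Lemma swap_aut : is_aut eP (swapP T).
Proof.
apply: autP => [[x y] [x' y']]; rewrite !permE /sw /cart_prod /=.
by rewrite orbC andbC [(x == x') && _]andbC.
Qed.

Lemma other (y0 : T) : exists y1, y1 != y0.
Proof.
have [u [v [_ _ uv]]] := card_gt1P n2.
case: (eqVneq u y0) => [Eu|]; last by exists u.
by exists v; rewrite -Eu eq_sym.
Qed.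

Lemma prod_aut (phi : {perm T * T}) (al be : T -> T) :
  is_aut eP phi -> (forall x y, phi (x, y) = (al x, be y)) ->
  (forall x x', e (al x) (al x') = e x x') /\ (forall y y', e (be y) (be y') = e y y').
Proof.
move=> A E; split.
  move=> x x'; have := autE (x, x) (x', x) A.
  rewrite !E /cart_prod /= !eqxx !eirr !andbT !andbF !orbF; apply.
move=> y y'; have := autE (y, y) (y, y') A.
rewrite !E /cart_prod /= !eqxx !eirr /=; apply.
Qed.

Lemma col_kind (phi : {perm T * T}) x0 : is_aut eP phi ->
  (forall y y', (phi (x0, y)).2 = (phi (x0, y')).2) \/
  (forall y y', (phi (x0, y)).1 = (phi (x0, y')).1).
Proof.
move=> A.
have A' : is_aut eP (swapP T * phi)%g by apply: autM => //; apply: swap_aut.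
have := row_kind sg conn prime x0 A'.
by rewrite /= => -[H|H]; [left|right] => y y'; have := H y y'; rewrite !permM !permE.
Qed.

Lemma case_RH (phi : {perm T * T}) y0 : is_aut eP phi ->
  (forall x x', (phi (x, y0)).2 = (phi (x', y0)).2) ->
  exists al be : {perm T}, [/\ is_aut e al, is_aut e be &
      forall x y, phi (x, y) = (al x, be y)].
Proof.
move=> A RH.
pose a0 x := (phi (x, y0)).1.
have ainj : injective a0.
  move=> x x' E; suff : phi (x, y0) = phi (x', y0) by move/perm_inj => [].
  by rewrite [LHS]surjective_pairing [RHS]surjective_pairing -/(a0 x) -/(a0 x') E (RH x x').
pose pa := perm ainj.
have CV x y y' : (phi (x, y)).1 = (phi (x, y')).1.
  case: (col_kind x A) => // CH; exfalso.
  have [y1 ny1] := other y0.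
  pose x' := (pa^-1)%g (phi (x, y1)).1.
  have : phi (x', y0) = phi (x, y1).
    rewrite [LHS]surjective_pairing [RHS]surjective_pairing.
    have -> : (phi (x', y0)).1 = pa x' by rewrite permE.
    by rewrite /x' permKV (RH x' x) (CH y0 y1).
  by move/perm_inj => [_ E]; move: ny1; rewrite E eqxx.
have RHall y x x' : (phi (x, y)).2 = (phi (x', y)).2.
  case: (row_kind sg conn prime y A) => // RV; exfalso.
  have [x1 nx1] := other x.
  suff : phi (x1, y0) = phi (x, y0) by move/perm_inj => [E]; move: nx1; rewrite E eqxx.
  rewrite [LHS]surjective_pairing [RHS]surjective_pairing (RH x1 x).
  by rewrite (CV x1 y0 y) (RV x1 x) (CV x y y0).
pose b0 y := (phi (y0, y)).2.
have binj : injective b0.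
  move=> y y' E; suff : phi (y0, y) = phi (y0, y') by move/perm_inj => [].
  by rewrite [LHS]surjective_pairing [RHS]surjective_pairing -/(b0 y) -/(b0 y') E (CV y0 y y').
pose pb := perm binj.
have Eq x y : phi (x, y) = (pa x, pb y).
  rewrite !permE /a0 /b0 [LHS]surjective_pairing.
  by rewrite (CV x y y0) (RHall y x y0).
have [Ha Hb] := prod_aut A Eq.
by exists pa, pb; split => //; apply: autP.
Qed.

Lemma classify (phi : {perm T * T}) : is_aut eP phi ->
  exists al be : {perm T}, [/\ is_aut e al, is_aut e be &
      (forall x y, phi (x, y) = (al x, be y)) \/
      (forall x y, phi (x, y) = (be y, al x))].
Proof.
move=> A.
have /card_gt1P [y0 [_ [_ _ _]]] := n2.
case: (row_kind sg conn prime y0 A) => H.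
  have [al [be [Aa Ab E]]] := case_RH A H.
  by exists al, be; split => //; left.
have A' : is_aut eP (phi * swapP T)%g by apply: autM => //; apply: swap_aut.
have H' : forall x x', ((phi * swapP T)%g (x, y0)).2 = ((phi * swapP T)%g (x', y0)).2.
  by move=> x x'; rewrite !permM !permE /sw /=.
have [al [be [Aa Ab E]]] := case_RH A' H'.
exists al, be; split => //; right => x y.
have := E x y; rewrite permM permE /sw => Exy.
by rewrite [LHS]surjective_pairing; case: Exy => -> ->.
Qed.
End Class.

Section Gen2.
Variables (U : finType) (r : rel U).
Hypothesis sg : simple_graph r.

Lemma imset2s (V : finType) (f : U -> V) a b : f @: [set a; b] = [set f a; f b].
Proof. by rewrite imsetU1 imset_set1. Qed.

Lemma edgesP X : reflect (exists x y, r x y /\ X = [set x; y]) (X \in edges r).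
Proof.
apply: (iffP imset2P) => [[x y xin yin EX]|[x [y [rxy ->]]]].
  by move: yin; rewrite inE => rxy; exists x, y.
by exists x y; rewrite ?in_setT ?inE.
Qed.

Lemma edge_aut s X : is_aut r s -> X \in edges r -> s @: X \in edges r.
Proof.
move=> As /edgesP[x [y [rxy ->]]]; apply/edgesP; exists (s x), (s y).
by rewrite autE // imset2s.
Qed.

Lemma iterF (s : {perm U}) k (A : {set U}) :
  iter k (fun B : {set U} => s @: B) A = (s ^+ k)%g @: A.
Proof.
elim: k => [|k IH] /=.
  rewrite expg0; apply/setP => x; apply/idP/imsetP => [xA|[y yA ->]].
    by exists x; rewrite ?perm1.
  by rewrite perm1.
by rewrite IH -imset_comp expgSr; apply: eq_imset => x; rewrite permM.
Qed.

Lemma fconE (s : {perm U}) A B : fconnect (fun C : {set U} => s @: C) A B ->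
  exists k, B = (s ^+ k)%g @: A.
Proof. by move=> c; exists (findex (fun C : {set U} => s @: C) A B); rewrite -iterF iter_findex. Qed.

Lemma fconE' (s : {perm U}) x y : fconnect s x y -> exists k, y = (s ^+ k)%g x.
Proof. by move=> c; exists (findex s x y); rewrite permX iter_findex. Qed.

Lemma F_inj (s : {perm U}) : injective (fun C : {set U} => s @: C).
Proof. by apply: imset_inj; apply: perm_inj. Qed.

Lemma imsetKV (s : {perm U}) (A : {set U}) : s @: ((s^-1)%g @: A) = A.
Proof. by rewrite -imset_comp -[RHS]imset_id; apply: eq_imset => x /=; rewrite permKV. Qed.

Lemma vcyclesE (s : {perm U}) : vcycles s = ecount s [set: U].
Proof.
rewrite /vcycles /ecount /porbits; apply: eq_card => O.
have E x : orbS s [set: U] x = porbit s x.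
  apply/setP => y; rewrite inE in_setT /=; apply/idP/porbitP.
    by move/fconE'.
  by case=> i ->; rewrite permX fconnect_iter.
by apply/imsetP/imsetP => -[x _ ->]; exists x; rewrite ?in_setT ?E.
Qed.
End Gen2.

Section Count.
Variables (T : finType) (e : rel T).
Hypothesis sg : simple_graph e.
Let esym : symmetric e. Proof. by case: sg. Qed.
Let eirr : irreflexive e. Proof. by case: sg. Qed.
Local Notation eP := (cart_prod e e).
Local Notation n := #|T|.
Local Notation m := #|edges e|.

Definition hor (X : {set T}) (y : T) : {set T * T} := [set (x, y) | x in X].
Definition vert (x : T) (Y : {set T}) : {set T * T} := [set (x, y) | y in Y].

Lemma hor_edge X y : X \in edges e -> hor X y \in edges eP.
Proof.
move=> /edgesP[a [b [eab ->]]]; apply/edgesP; exists (a, y), (b, y).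
by rewrite /hor imset2s /cart_prod /= eab eqxx.
Qed.

Lemma vert_edge x Y : Y \in edges e -> vert x Y \in edges eP.
Proof.
move=> /edgesP[a [b [eab ->]]]; apply/edgesP; exists (x, a), (x, b).
by rewrite /vert imset2s /cart_prod /= eab eqxx orbT.
Qed.

Lemma edgeP_cases Z : Z \in edges eP ->
  (exists X y, X \in edges e /\ Z = hor X y) \/
  (exists x Y, Y \in edges e /\ Z = vert x Y).
Proof.
move=> /edgesP[[a1 a2] [[b1 b2] []]]; rewrite /cart_prod /=.
case/orP => [/andP[e1 /eqP <-]|/andP[/eqP <- e2]] ->.
  left; exists [set a1; b1], a2; split; first by apply/edgesP; exists a1, b1.
  by rewrite /hor imset2s.
right; exists a1, [set a2; b2]; split; first by apply/edgesP; exists a2, b2.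
by rewrite /vert imset2s.
Qed.

Lemma edge_n0 X : X \in edges e -> exists x, x \in X.
Proof. by move=> /edgesP[a [b [_ ->]]]; exists a; rewrite !inE eqxx. Qed.

Lemma hor_inj X X' y y' : X \in edges e -> hor X y = hor X' y' -> X = X' /\ y = y'.
Proof.
move=> XE E.
have fh Z w : [set u.1 | u in hor Z w] = Z.
  by rewrite /hor -imset_comp -[RHS]imset_id; apply: eq_imset.
split; first by rewrite -(fh X y) E fh.
have [a aX] := edge_n0 XE.
have : (a, y) \in hor X' y' by rewrite -E; apply: imset_f.
by case/imsetP => z _ [].
Qed.

Lemma vert_inj x x' Y Y' : Y \in edges e -> vert x Y = vert x' Y' -> x = x' /\ Y = Y'.
Proof.
move=> YE E.
have fh w Z : [set u.2 | u in vert w Z] = Z.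
  by rewrite /vert -imset_comp -[RHS]imset_id; apply: eq_imset.
split; last by rewrite -(fh x Y) E fh.
have [a aY] := edge_n0 YE.
have : (x, a) \in vert x' Y' by rewrite -E; apply: imset_f.
by case/imsetP => z _ [].
Qed.

Lemma hor_neq_vert X y x Y : X \in edges e -> hor X y <> vert x Y.
Proof.
move=> /edgesP[a [b [eab ->]]] E.
have : (a, y) \in vert x Y by rewrite -E /hor imset2s !inE eqxx.
have : (b, y) \in vert x Y by rewrite -E /hor imset2s !inE eqxx orbT.
case/imsetP => z1 _ [E1 _] /imsetP[z2 _ [E2 _]].
by move: eab; rewrite E1 E2 eirr.
Qed.

Definition prodf (al be : {perm T}) (u : T * T) := (al u.1, be u.2).
Lemma prodf_inj al be : injective (prodf al be).
Proof. by move=> [x y] [x' y'] [/perm_inj -> /perm_inj ->]. Qed.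
Definition prodp al be : {perm T * T} := perm (@prodf_inj al be).

Definition swf (al be : {perm T}) (u : T * T) := (be u.2, al u.1).
Lemma swf_inj al be : injective (swf al be).
Proof. by move=> [x y] [x' y'] [/perm_inj -> /perm_inj ->]. Qed.
Definition swp al be : {perm T * T} := perm (@swf_inj al be).

Lemma prodpE al be x y : prodp al be (x, y) = (al x, be y).
Proof. by rewrite permE. Qed.
Lemma swpE al be x y : swp al be (x, y) = (be y, al x).
Proof. by rewrite permE. Qed.

Lemma prodpX al be k : (prodp al be ^+ k)%g = prodp (al ^+ k) (be ^+ k).
Proof.
elim: k => [|k IH]; apply/permP => -[x y].
  by rewrite !expg0 perm1 prodpE !perm1.
by rewrite !expgSr permM IH !prodpE !permM.
Qed.

Lemma prodp_hor al be X y : prodp al be @: hor X y = hor (al @: X) (be y).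
Proof. by rewrite /hor -!imset_comp; apply: eq_imset => x /=; rewrite prodpE. Qed.
Lemma prodp_vert al be x Y : prodp al be @: vert x Y = vert (al x) (be @: Y).
Proof. by rewrite /vert -!imset_comp; apply: eq_imset => y /=; rewrite prodpE. Qed.
Lemma swp_hor al be X y : swp al be @: hor X y = vert (be y) (al @: X).
Proof. by rewrite /hor /vert -!imset_comp; apply: eq_imset => x /=; rewrite swpE. Qed.

Lemma Sf_eP (s : {perm T * T}) : is_aut eP s ->
  forall X, X \in edges eP -> s @: X \in edges eP.
Proof. by move=> As X; apply: edge_aut. Qed.

Lemma prodp_aut al be : is_aut e al -> is_aut e be -> is_aut eP (prodp al be).
Proof.
move=> Aa Ab; apply: autP => -[x y] [x' y'].
by rewrite !prodpE /cart_prod /= (autE _ _ Aa) (autE _ _ Ab) (inj_eq (@perm_inj _ al)) (inj_eq (@perm_inj _ be)).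
Qed.

Lemma card_setU_le (V : finType) (A B : {set V}) : #|A :|: B| <= #|A| + #|B|.
Proof. by rewrite cardsU leq_subr. Qed.

Lemma upper_gen (al be : {perm T}) (A : {set {set T}}) (B C : {set T}) (D : {set {set T}}) :
  (forall X y, X \in edges e -> exists2 X0, X0 \in A & exists2 y0, y0 \in B &
       exists k, X = (al ^+ k)%g @: X0 /\ y = (be ^+ k)%g y0) ->
  (forall x Y, Y \in edges e -> exists2 x0, x0 \in C & exists2 Y0, Y0 \in D &
       exists k, x = (al ^+ k)%g x0 /\ Y = (be ^+ k)%g @: Y0) ->
  ecycles eP (prodp al be) <= #|A| * #|B| + #|C| * #|D|.
Proof.
move=> HH HV.
pose DD := [set hor p.1 p.2 | p in setX A B] :|: [set vert p.1 p.2 | p in setX C D].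
apply: (@leq_trans #|DD|).
  apply: (ecount_le (@F_inj _ (prodp al be))) => Z /edgeP_cases [[X [y [XE ->]]]|[x [Y [YE ->]]]].
    have [X0 X0A [y0 y0B [k [-> ->]]]] := HH X y XE.
    exists (hor X0 y0); first by rewrite inE; apply/orP; left; apply/imsetP; exists (X0, y0); rewrite // inE X0A y0B.
    by rewrite -prodp_hor -prodpX -iterF fconnect_iter.
  have [x0 x0C [Y0 Y0D [k [-> ->]]]] := HV x Y YE.
  exists (vert x0 Y0); first by rewrite inE; apply/orP; right; apply/imsetP; exists (x0, Y0); rewrite // inE x0C Y0D.
  by rewrite -prodp_vert -prodpX -iterF fconnect_iter.
apply: (leq_trans (card_setU_le _ _)).
by apply: leq_add; rewrite -cardsX leq_imset_card.
Qed.


Definition RE (al : {perm T}) := Rep (fun C : {set T} => al @: C) (edges e).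
Definition RV (al : {perm T}) := Rep al [set: T].

Lemma RE_sub al : RE al \subset edges e.
Proof. exact: rep_sub. Qed.

Lemma upper_alpha al be : is_aut e al -> is_aut e be ->
  ecycles eP (prodp al be) <= ecycles e al * n + vcycles al * m.
Proof.
move=> Aa Ab.
apply: leq_trans (upper_gen (A := RE al) (B := [set: T]) (C := RV al) (D := edges e) _ _) _.
- move=> X y XE.
  have [r0 r0R c] := rep_ex (@F_inj _ al) XE.
  have [k Ek] := fconE c.
  exists r0 => //; exists (((be ^+ k)^-1)%g y); first by rewrite in_setT.
  by exists k; rewrite permKV.
- move=> x Y YE.
  have [x0 x0R c] := rep_ex (@perm_inj _ al) (in_setT x).
  have [k Ek] := fconE' c.
  exists x0 => //; exists (((be ^+ k)^-1)%g @: Y).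
    by apply: edge_aut => //; apply: autV; apply: autX.
  by exists k; rewrite imsetKV.
by rewrite cardsT /RE /RV (card_Rep (@F_inj _ al)) (card_Rep (@perm_inj _ al)) -vcyclesE.
Qed.

Lemma upper_beta al be : is_aut e al -> is_aut e be ->
  ecycles eP (prodp al be) <= ecycles e be * n + vcycles be * m.
Proof.
move=> Aa Ab.
apply: leq_trans (upper_gen (A := edges e) (B := RV be) (C := [set: T]) (D := RE be) _ _) _.
- move=> X y XE.
  have [y0 y0R c] := rep_ex (@perm_inj _ be) (in_setT y).
  have [k Ek] := fconE' c.
  exists (((al ^+ k)^-1)%g @: X).
    by apply: edge_aut => //; apply: autV; apply: autX.
  by exists y0 => //; exists k; rewrite imsetKV.
- move=> x Y YE.
  have [Y0 Y0R c] := rep_ex (@F_inj _ be) YE.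
  have [k Ek] := fconE c.
  exists (((al ^+ k)^-1)%g x); first by rewrite in_setT.
  by exists Y0 => //; exists k; rewrite permKV.
by rewrite cardsT /RE /RV (card_Rep (@F_inj _ be)) (card_Rep (@perm_inj _ be)) -vcyclesE addnC mulnC [vcycles _ * _]mulnC.
Qed.

Definition DV0 := [set vert p.1 p.2 | p in setX [set: T] (edges e)].

Lemma DV0_sub : DV0 \subset edges eP.
Proof.
apply/subsetP => Z /imsetP[[x Y]]; rewrite inE /= => /andP[_ YE] ->.
exact: vert_edge.
Qed.

Lemma card_DV0 : #|DV0| = n * m.
Proof.
rewrite card_in_imset ?cardsX ?cardsT // => -[x Y] [x' Y']; move=> /setXP[_ YE] _ E.
by case: (vert_inj YE E) => /= -> ->.
Qed.

Lemma swp_vert al be x Y : swp al be @: vert x Y = hor (be @: Y) (al x).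
Proof. by rewrite /hor /vert -!imset_comp; apply: eq_imset => y /=; rewrite swpE. Qed.

Lemma upper_swp al be : is_aut e al -> is_aut e be ->
  ecycles eP (swp al be) <= n * m.
Proof.
move=> Aa Ab; rewrite -card_DV0.
apply: (ecount_le (@F_inj _ (swp al be))) => Z /edgeP_cases [[X [y [XE ->]]]|[x [Y [YE ->]]]].
  exists (vert (be y) (al @: X)).
    by apply/imsetP; exists (be y, al @: X); rewrite // inE in_setT /= edge_aut.
  rewrite fconnect_sym; last exact: F_inj.
  by rewrite -(swp_hor al be X y) fconnect1.
exists (vert x Y); last exact: connect0.
by apply/imsetP; exists (x, Y); rewrite // inE in_setT.
Qed.

Lemma imset1 (U : finType) (A : {set U}) : (1%g : {perm U}) @: A = A.
Proof. by rewrite -[RHS]imset_id; apply: eq_imset => x; rewrite perm1. Qed.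

Lemma swp_aut al be : is_aut e al -> is_aut e be -> is_aut eP (swp al be).
Proof.
move=> Aa Ab; apply: autP => -[x y] [x' y'].
rewrite !swpE /cart_prod /= (autE _ _ Aa) (autE _ _ Ab) (inj_eq (@perm_inj _ al)) (inj_eq (@perm_inj _ be)).
by rewrite orbC andbC [(x == x') && _]andbC.
Qed.

Lemma swp11X k : ((swp 1 1) ^+ k)%g = 1%g \/ ((swp 1 1) ^+ k)%g = swp 1 1.
Proof.
elim: k => [|k [IH|IH]]; first by left; rewrite expg0.
  by right; rewrite expgSr IH mul1g.
left; rewrite expgSr IH; apply/permP => -[x y].
by rewrite permM !swpE !perm1.
Qed.

Lemma lower_swp : n * m <= ecycles eP (swp 1 1).
Proof.
rewrite -card_DV0.
apply: (@ecount_ge _ (fun C : {set T * T} => swp 1 1 @: C) _ _ DV0_sub) => d d' /imsetP[[x Y]] + -> /imsetP[[x' Y']] + -> c.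
move=> /setXP[_ YE] /setXP[_ Y'E].
have [k Ek] := fconE c.
case: (swp11X k) Ek => ->; first by rewrite imset1.
rewrite swp_vert imset1 => E; exfalso.
exact: (hor_neq_vert YE (sym_eq E)).
Qed.

Lemma lower_prod be : is_aut e be ->
  ecycles e be * n + vcycles be * m <= ecycles eP (prodp be 1).
Proof.
move=> Ab.
pose DH := [set hor p.1 p.2 | p in setX (RE be) [set: T]].
pose DV := [set vert p.1 p.2 | p in setX (RV be) (edges e)].
have cDH : #|DH| = ecycles e be * n.
  rewrite card_in_imset ?cardsX ?cardsT /RE ?(card_Rep (@F_inj _ be)) // => -[X y] [X' y'].
  move=> /setXP[XR _] _ E.
  by case: (hor_inj (subsetP (RE_sub be) _ XR) E) => /= -> ->.
have cDV : #|DV| = vcycles be * m.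
  rewrite card_in_imset ?cardsX ?cardsT /RV ?(card_Rep (@perm_inj _ be)) -?vcyclesE // => -[x Y] [x' Y'].
  move=> /setXP[_ YE] _ E.
  by case: (vert_inj YE E) => /= -> ->.
have dis : DH :&: DV = set0.
  apply/setP => Z; rewrite !inE; apply/andP => -[/imsetP[[X y]] + -> /imsetP[[x Y]] _].
  rewrite inE /= => /andP[XR _]; apply: hor_neq_vert.
  exact: (subsetP (RE_sub be)).
rewrite -cDH -cDV.
have -> : #|DH| + #|DV| = #|DH :|: DV| by rewrite cardsU dis cards0 subn0.
apply: (@ecount_ge _ (fun C : {set T * T} => prodp be 1 @: C)).
  apply/subsetP => Z; rewrite inE => /orP[/imsetP[[X y]]|/imsetP[[x Y]]]; rewrite inE /= => /andP[H1 H2] ->.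
    by apply: hor_edge; apply: (subsetP (RE_sub be)).
  exact: vert_edge.
move=> d d' + + c; have [k ->] := fconE c.
rewrite prodpX expg1n.
rewrite !inE => /orP[/imsetP[[X y]]|/imsetP[[x Y]]]; rewrite inE /= => /andP[H1 H2] ->.
  have XE := subsetP (RE_sub be) _ H1.
  rewrite prodp_hor perm1 => /orP[/imsetP[[X' y']]|/imsetP[[x' Y']]]; rewrite inE /= => /andP[H1' H2'] E.
    have [E1 E2] := hor_inj (edge_aut (autX k Ab) XE) E.
    suff EX : X = X' by rewrite E1 EX.
    apply: (rep_uniq (@F_inj _ be) H1 H1').
    by rewrite -E1 -iterF fconnect_iter.
  by exfalso; apply: (hor_neq_vert (edge_aut (autX k Ab) XE) E).
rewrite prodp_vert imset1 => /orP[/imsetP[[X' y']]|/imsetP[[x' Y']]]; rewrite inE /= => /andP[H1' H2'] E.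
  by exfalso; apply: (hor_neq_vert (subsetP (RE_sub be) _ H1') (sym_eq E)).
have [E1 E2] := vert_inj H2 E.
rewrite E1; congr vert.
apply: (rep_uniq (@perm_inj _ be) H1 H1').
by rewrite -E1 permX fconnect_iter.
Qed.

End Count.

Section Final.
Variables (T : finType) (e : rel T).
Hypothesis sg : simple_graph e.
Hypothesis conn : connected_graph e.
Hypothesis prime : cart_prime e.
Hypothesis n2 : 1 < #|T|.
Local Notation eP := (cart_prod e e).
Local Notation n := #|T|.
Local Notation m := #|edges e|.

Lemma r_ge be : is_aut e be -> be != 1%g ->
  ecycles e be * n + vcycles be * m <= r_param e.
Proof.
move=> Ab nb; rewrite /r_param.
apply: (@leq_bigmax_cond _ (fun s => is_aut e s && (s != 1%g))
   (fun s => ecycles e s * #|T| + vcycles s * #|edges e|)).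
by rewrite Ab nb.
Qed.

Lemma r_arg : 0 < r_param e -> exists be, [/\ is_aut e be, be != 1%g &
  r_param e = ecycles e be * n + vcycles be * m].
Proof.
move=> rpos.
pose A := [pred s : {perm T} | is_aut e s && (s != 1%g)].
have Apos : 0 < #|A|.
  rewrite lt0n; apply/negP => /eqP /card0_eq A0.
  move: rpos; rewrite /r_param big_pred0 // => s.
have [i0 Ai0 E] := eq_bigmax_cond (fun s => ecycles e s * #|T| + vcycles s * #|edges e|) Apos.
move: Ai0; rewrite inE => /andP[Ai ni].
by exists i0; split => //; rewrite -E.
Qed.

Lemma upper (phi : {perm T * T}) : is_aut eP phi -> phi != 1%g ->
  ecycles eP phi <= maxn (n * m) (r_param e).
Proof.
move=> A nphi.
have [al [be [Aa Ab [E|E]]]] := classify sg conn prime n2 A.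
  have Ep : phi = prodp al be by apply/permP => -[x y]; rewrite E prodpE.
  rewrite Ep; case: (eqVneq al 1%g) => [Ea | na].
    case: (eqVneq be 1%g) => [Eb | nb].
      by move: nphi; rewrite Ep Ea Eb; case/eqP; apply/permP => -[x y]; rewrite prodpE !perm1.
    apply: leq_trans (upper_beta Aa Ab) _.
    by apply: leq_trans (r_ge Ab nb) _; apply: leq_maxr.
  apply: leq_trans (upper_alpha Aa Ab) _.
  by apply: leq_trans (r_ge Aa na) _; apply: leq_maxr.
have Ep : phi = swp al be by apply/permP => -[x y]; rewrite E swpE.
rewrite Ep; apply: leq_trans (upper_swp Aa Ab) _; apply: leq_maxl.
Qed.

Lemma lower_ex : exists2 phi : {perm T * T}, is_aut eP phi && (phi != 1%g) &
  maxn (n * m) (r_param e) <= ecycles eP phi.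
Proof.
case: (leqP (r_param e) (n * m)) => H.
  exists (swp 1 1).
    rewrite swp_aut ?aut1 //=.
    have /card_gt1P [x [y [_ _ nxy]]] := n2.
    apply/eqP => /permP /(_ (x, y)); rewrite swpE !perm1 => -[Eyx _].
    by move: nxy; rewrite Eyx eqxx.
  apply: leq_trans (lower_swp sg); by rewrite ?geq_max ?leqnn ?H.
have [be [Ab nb Er]] : exists be, [/\ is_aut e be, be != 1%g &
  r_param e = ecycles e be * n + vcycles be * m].
  by apply: r_arg; apply: leq_ltn_trans H.
exists (prodp be 1).
  rewrite prodp_aut ?aut1 //=.
  have [x nx] : exists x, be x != x.
    apply/existsP; move: nb; apply: contraR; rewrite negb_exists => /forallP H0.
    by apply/eqP/permP => x; rewrite perm1; apply/eqP; have := H0 x; rewrite negbK.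
  apply/eqP => /permP /(_ (x, x)); rewrite prodpE !perm1 => -[Ex].
  by move: nx; rewrite Ex eqxx.
apply: leq_trans (lower_prod sg Ab); by rewrite -Er ?geq_max ?leqnn ?(ltnW H).
Qed.

End Final.

Theorem mainTheorem10 (T : finType) (e : rel T) :
  simple_graph e -> connected_graph e -> cart_prime e -> 1 < #|T| ->
  theta'_is (cart_prod e e)
    (maxn (#|T| * #|edges e|) (r_param e)).+1.
Proof.
move=> sg conn prime n2.
split => //.
- move=> c cc s As Hs.
  case: (eqVneq s 1%g) => // ns; exfalso.
  have Hle := upper sg conn prime n2 As ns.
  have Sf : forall X, X \in edges (cart_prod e e) -> s @: X \in edges (cart_prod e e).
    by move=> X; apply: edge_aut.
  have Hcol := color_le (@F_inj _ s) Sf Hs.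
  have Hsub : [set: 'I_(maxn (#|T| * #|edges e|) (r_param e)).+1] \subset
              [set c X | X in edges (cart_prod e e)].
    apply/subsetP => i _; have [X XE cX] := cc i.
    by apply/imsetP; exists X; rewrite ?cX.
  have := subset_leq_card Hsub; rewrite cardsT card_ord => H1.
  have := leq_trans H1 (leq_trans Hcol Hle).
  by rewrite ltnn.
- move=> j /andP[j0 jM] Hall.
  have [phi /andP[Aphi nphi] Hphi] := lower_ex sg n2.
  have jle : 0 < j <= ecount (fun C : {set T * T} => phi @: C) (edges (cart_prod e e)).
    by rewrite j0 /=; apply: leq_trans Hphi.
  have [c [surj inv]] := color_ex (@F_inj _ phi) jle.
  by move: nphi; rewrite (Hall c surj phi Aphi inv) eqxx.
Qed.
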